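(* Let $G\in\mathcal{G}$ and $x\in[v^{\min},v^{\max}]$. The function $\Psi_x(b)=G(b)(x-b)+\widehat G(b)$ on $[v^{\min},v^{\max}]$ (the agent's expected utility in Mechanism 2 from bidding $b$ when his value is $x$) attains its maximum at $b=x$, with maximum value $\widehat G(x)$. Consequently, in Mechanism 2 an agent who knows $v_a$ obtains optimal expected utility $E[\widehat G(v_a)]$ by bidding $v_a$, and an agent who knows only the prior obtains optimal utility $\widehat G(E[v_a])$ by bidding $E[v_a]$; and there exists $G\in\mathcal{G}$ with $E[\widehat G(v_a)]-\widehat G(E[v_a])>c$ if and only if $c<E[\max(0,v_a-E[v_a])]$, the point mass at $E[v_a]$ being such a $G$ in that case.
   Context: $\mathcal{G}$ is the set of cdfs of probability measures on $[v^{\min},v^{\max}]$, $0\le v^{\min}<v^{\max}$, and $\widehat G(b)=\int_{v^{\min}}^bG(r)\,dr$. The agent's value $v_a$ is a random variable supported in $[v^{\min},v^{\max}]$; he can learn it at cost $c\ge0$. Mechanism 2 (parameter $G$): the agent bids $b\in[v^{\min},v^{\max}]$; with probability $G(b)$ the agent buys the object at price $b-\widehat G(b)/G(b)$; otherwise nothing happens. The agent is risk-neutral with quasi-linear utility. *)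

(* Defs.v *)
From Stdlib Require Import Reals Lra ClassicalEpsilon.
Open Scope R_scope.

Definition is_cdf_on (vmin vmax : R) (G : R -> R) : Prop :=
  (forall x y, x <= y -> G x <= G y) /\
  (forall x, x < vmin -> G x = 0) /\
  (forall x, vmax <= x -> G x = 1) /\
  (forall x eps, 0 < eps -> exists delta, 0 < delta /\
      forall y, x <= y < x + delta -> Rabs (G y - G x) < eps).

(* Ghat(b) = \int_{vmin}^b G(r) dr (Riemann integral; the value is independent
   of the integrability proof chosen; 0 if not integrable, which never happens
   for a cdf). *)
Definition Ghat (vmin : R) (G : R -> R) (b : R) : R :=
  match excluded_middle_informative (inhabited (Riemann_integrable G vmin b)) with
  | left h => RiemannInt (epsilon h (fun _ => True))
  | right _ => 0
  end.

Definition Psi (vmin : R) (G : R -> R) (x b : R) : R :=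
  G b * (x - b) + Ghat vmin G b.

Definition point_mass_cdf (m : R) : R -> R :=
  fun r => if Rlt_dec r m then 0 else 1.

(* Expectation with respect to the law of v_a, a probability measure supported
   in [vmin, vmax], presented as an abstract integral: Integ is the class of
   integrable functions (containing all continuous functions, closed under
   linear combinations), E is linear, normalized and positive for functions
   nonnegative on [vmin, vmax]. *)
Definition is_expectation (vmin vmax : R) (Integ : (R -> R) -> Prop)
    (E : (R -> R) -> R) : Prop :=
  (forall f, continuity f -> Integ f) /\
  (forall f g, Integ f -> Integ g -> Integ (fun x => f x + g x)) /\
  (forall f r, Integ f -> Integ (fun x => r * f x)) /\
  (forall f g, Integ f -> Integ g -> E (fun x => f x + g x) = E f + E g) /\
  (forall f r, Integ f -> E (fun x => r * f x) = r * E f) /\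
  E (fun _ => 1) = 1 /\
  (forall f, Integ f -> (forall x, vmin <= x <= vmax -> 0 <= f x) -> 0 <= E f).

(* Main.v *)
Require Import Defs.
From Stdlib Require Import Reals Lra Lia ClassicalEpsilon FunctionalExtensionality.
Open Scope R_scope.

Lemma IsStepFun_open_ext (f g : R -> R) a b : a <= b ->
  (forall x, a < x < b -> f x = g x) -> IsStepFun f a b -> IsStepFun g a b.
Proof.
  intros Hab Hfg [l [lf H]]. exists l. exists lf.
  destruct H as (Hord & H0 & H1 & Hlen & Hc).
  rewrite Rmin_left in H0 by exact Hab. rewrite Rmax_right in H1 by exact Hab.
  unfold adapted_couple. rewrite Rmin_left by exact Hab. rewrite Rmax_right by exact Hab.
  repeat split; auto.
  intros i Hi x Hx. rewrite <- (Hc i Hi x Hx). symmetry. apply Hfg.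
  destruct (RList.RList_P6 l) as [P _]. specialize (P Hord).
  destruct Hx as [Hx1 Hx2]. split.
  - apply Rle_lt_trans with (RList.pos_Rl l i); auto.
    rewrite <- H0. apply P; lia.
  - apply Rlt_le_trans with (RList.pos_Rl l (S i)); auto.
    rewrite <- H1. apply P; lia.
Qed.

Definition Aprx (f : R -> R) a b (d : R) : Type :=
  {phi : StepFun a b & {psi : StepFun a b |
    (forall t, Rmin a b <= t <= Rmax a b -> Rabs (f t - phi t) <= psi t) /\
    Rabs (RiemannInt_SF psi) <= d}}.

Lemma Aprx_weaken f a b d d' : d <= d' -> Aprx f a b d -> Aprx f a b d'.
Proof.
  intros Hd [phi [psi [H1 H2]]]. exists phi, psi. split; auto. lra.
Qed.

Lemma Aprx_glue f a b c d1 d2 : a <= b -> b <= c ->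
  Aprx f a b d1 -> Aprx f b c d2 -> Aprx f a c (d1 + d2).
Proof.
  intros Hab Hbc [phi1 [psi1 [H1 J1]]] [phi2 [psi2 [H2 J2]]].
  set (phi3 := fun x => if Rle_dec x b then phi1 x else phi2 x).
  set (psi3 := fun x => if Rle_dec x b then psi1 x else psi2 x).
  assert (Pab : IsStepFun phi3 a b).
  { apply (IsStepFun_open_ext phi1); auto. intros x Hx. unfold phi3.
    destruct (Rle_dec x b); [reflexivity | lra]. apply pre. }
  assert (Pbc : IsStepFun phi3 b c).
  { apply (IsStepFun_open_ext phi2); auto. intros x Hx. unfold phi3.
    destruct (Rle_dec x b); [lra | reflexivity]. apply pre. }
  assert (Qab : IsStepFun psi3 a b).
  { apply (IsStepFun_open_ext psi1); auto. intros x Hx. unfold psi3.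
    destruct (Rle_dec x b); [reflexivity | lra]. apply pre. }
  assert (Qbc : IsStepFun psi3 b c).
  { apply (IsStepFun_open_ext psi2); auto. intros x Hx. unfold psi3.
    destruct (Rle_dec x b); [lra | reflexivity]. apply pre. }
  pose (Qac := StepFun_P46 Qab Qbc).
  exists (mkStepFun (StepFun_P46 Pab Pbc)), (mkStepFun Qac). split.
  - intros t Ht. rewrite Rmin_left in Ht by lra. rewrite Rmax_right in Ht by lra.
    simpl. unfold phi3, psi3. destruct (Rle_dec t b).
    + apply H1. rewrite Rmin_left by lra. rewrite Rmax_right by lra. lra.
    + apply H2. rewrite Rmin_left by lra. rewrite Rmax_right by lra. lra.
  - simpl. rewrite <- (StepFun_P43 Qab Qbc Qac).
    assert (E1 : RiemannInt_SF (mkStepFun Qab) = RiemannInt_SF psi1).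
    { apply Rle_antisym; apply StepFun_P37; auto; intros x Hx; simpl; unfold psi3;
      destruct (Rle_dec x b); lra. }
    assert (E2 : RiemannInt_SF (mkStepFun Qbc) = RiemannInt_SF psi2).
    { apply Rle_antisym; apply StepFun_P37; auto; intros x Hx; simpl; unfold psi3;
      destruct (Rle_dec x b); lra. }
    rewrite E1, E2. eapply Rle_trans; [apply Rabs_triang|]. lra.
Qed.

Lemma Aprx_piece f a b : (forall x y, x <= y -> f x <= f y) -> a <= b ->
  Aprx f a b ((b - a) * (f b - f a)).
Proof.
  intros Hf Hab.
  exists (mkStepFun (StepFun_P4 a b (f a))), (mkStepFun (StepFun_P4 a b (f b - f a))).
  split.
  - intros t Ht. rewrite Rmin_left in Ht by lra. rewrite Rmax_right in Ht by lra.
    simpl. unfold fct_cte. pose proof (Hf a t (proj1 Ht)). pose proof (Hf t b (proj2 Ht)).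
    rewrite Rabs_right by lra. lra.
  - rewrite StepFun_P18. pose proof (Hf a b Hab).
    rewrite Rabs_right by nra. nra.
Qed.

Lemma Aprx_grid f : (forall x y, x <= y -> f x <= f y) -> forall n a h, 0 <= h ->
  Aprx f a (a + INR n * h) (h * (f (a + INR n * h) - f a)).
Proof.
  intros Hf. induction n as [|n IH]; intros a h Hh.
  - simpl. replace (a + 0 * h) with a by ring.
    eapply Aprx_weaken; [|apply (Aprx_piece f a a Hf (Rle_refl a))]. lra.
  - rewrite S_INR. replace (a + (INR n + 1) * h) with ((a + INR n * h) + h) by ring.
    assert (0 <= INR n) by apply pos_INR.
    eapply Aprx_weaken; [|apply (Aprx_glue f a (a + INR n * h)); [nra|lra|apply IH; auto|apply (Aprx_piece f); [auto|lra]]].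
    replace (a + INR n * h + h - (a + INR n * h)) with h by ring. lra.
Qed.

Lemma monotone_integrable f : (forall x y, x <= y -> f x <= f y) ->
  forall a b, Riemann_integrable f a b.
Proof.
  intros Hf.
  assert (K : forall a b, a <= b -> Riemann_integrable f a b).
  { intros a b Hab eps.
    set (K := (b - a) * (f b - f a)).
    assert (HK : 0 <= K) by (unfold K; pose proof (Hf a b Hab); nra).
    assert (He : 0 < eps / (K + 1)) by (apply Rdiv_lt_0_compat; [apply cond_pos|lra]).
    destruct (constructive_indefinite_description _ (archimed_cor1 _ He)) as [N [HN1 HN2]].
    assert (HNpos : 0 < INR N) by (apply lt_0_INR; exact HN2).
    set (h := (b - a) / INR N).
    assert (Hh : 0 <= h) by (unfold h; unfold Rdiv; apply Rmult_le_pos; [lra | left; apply Rinv_0_lt_compat; lra]).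
    assert (Eb : a + INR N * h = b) by (unfold h; field; lra).
    pose proof (Aprx_grid f Hf N a h Hh) as X. rewrite Eb in X.
    destruct X as [phi [psi [H1 H2]]]. exists phi, psi. split; auto.
    eapply Rle_lt_trans; [exact H2|].
    assert (Eq : h * (f b - f a) = K * / INR N) by (unfold h, K; field; lra).
    rewrite Eq.
    assert (K * / INR N <= K * (eps / (K + 1))) by (apply Rmult_le_compat_l; lra).
    assert (K * (eps / (K + 1)) < eps).
    { unfold Rdiv. replace (K * (eps * / (K + 1))) with (eps * (K / (K+1))) by (field; lra).
      pose proof (cond_pos eps). assert (K / (K+1) < 1) by (apply (Rmult_lt_reg_r (K+1)); [lra|]; unfold Rdiv; rewrite Rmult_assoc, Rinv_l by lra; lra). nra. }
    lra. }
  intros a b. destruct (Rle_dec a b). apply K; auto. apply RiemannInt_P1, K; lra.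
Qed.

Lemma lip_continuity (f : R -> R) (L : R) : 0 <= L ->
  (forall x y, Rabs (f x - f y) <= L * Rabs (x - y)) -> continuity f.
Proof.
  intros HL Hf x. unfold continuity_pt, continue_in, limit1_in, limit_in.
  intros eps He. exists (eps / (L + 1)). split.
  - apply Rdiv_lt_0_compat; lra.
  - intros y [_ Hy]. simpl in *. unfold R_dist in *.
    eapply Rle_lt_trans; [apply Hf|].
    pose proof (Rabs_pos (y - x)).
    apply Rle_lt_trans with ((L+1) * Rabs (y - x)); [nra|].
    apply (Rmult_lt_compat_l (L+1)) in Hy; [|lra].
    replace ((L + 1) * (eps / (L + 1))) with eps in Hy by (field; lra). exact Hy.
Qed.

Section Cdf.
Variables (vmin vmax : R) (G : R -> R).
Hypothesis HG : is_cdf_on vmin vmax G.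
Hypothesis Hv : vmin < vmax.

Lemma G_mono : forall x y, x <= y -> G x <= G y.
Proof. apply HG. Qed.

Lemma G_bounds x : 0 <= G x <= 1.
Proof.
  destruct HG as (Hm & H0 & H1 & _). split.
  - rewrite <- (H0 (Rmin x (vmin - 1))). apply Hm, Rmin_l.
    apply Rle_lt_trans with (vmin - 1); [apply Rmin_r|lra].
  - rewrite <- (H1 (Rmax x vmax)). apply Hm, Rmax_l. apply Rmax_r.
Qed.

Definition GI a b := monotone_integrable G G_mono a b.

Lemma Ghat_eq b (pr : Riemann_integrable G vmin b) : Ghat vmin G b = RiemannInt pr.
Proof.
  unfold Ghat. destruct excluded_middle_informative as [h|n].
  - apply RiemannInt_P5.
  - exfalso. apply n. constructor. exact pr.
Qed.

Lemma Ghat_diff a b : Ghat vmin G b - Ghat vmin G a = RiemannInt (GI a b).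
Proof.
  rewrite (Ghat_eq b (GI vmin b)), (Ghat_eq a (GI vmin a)).
  rewrite <- (RiemannInt_P26 (GI vmin a) (GI a b) (GI vmin b)). ring.
Qed.

Lemma Ghat_incr a b : a <= b ->
  G a * (b - a) <= Ghat vmin G b - Ghat vmin G a <= G b * (b - a) /\
  0 <= Ghat vmin G b - Ghat vmin G a <= b - a.
Proof.
  intros Hab. rewrite Ghat_diff. split.
  - apply RiemannInt_const_bound; auto. intros x Hx. split; apply G_mono; lra.
  - pose proof (RiemannInt_const_bound (GI a b) (l:=0) (u:=1) Hab) as K.
    assert (0 * (b - a) <= RiemannInt (GI a b) <= 1 * (b - a)) by
      (apply K; intros; apply G_bounds). lra.
Qed.

Lemma Ghat_lip x y : Rabs (Ghat vmin G x - Ghat vmin G y) <= 1 * Rabs (x - y).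
Proof.
  destruct (Rle_dec y x).
  - destruct (Ghat_incr y x) as [_ K]; auto.
    rewrite !Rabs_right by lra. lra.
  - destruct (Ghat_incr x y) as [_ K]; [lra|].
    rewrite (Rabs_left1 (x - y)) by lra. rewrite Rabs_left1 by lra. lra.
Qed.

Lemma Ghat_cont : continuity (Ghat vmin G).
Proof. apply (lip_continuity _ 1); [lra|apply Ghat_lip]. Qed.

Lemma Psi_max x b : Psi vmin G x b <= Psi vmin G x x.
Proof.
  unfold Psi. destruct (Rle_dec b x).
  - destruct (Ghat_incr b x) as [K _]; auto. lra.
  - destruct (Ghat_incr x b) as [K _]; [lra|]. nra.
Qed.

Lemma Psi_diag x : Psi vmin G x x = Ghat vmin G x.
Proof. unfold Psi. ring. Qed.

Lemma Ghat_le_max m v : Ghat vmin G v <= Rmax 0 (v - m) + Ghat vmin G m.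
Proof.
  destruct (Rle_dec m v).
  - destruct (Ghat_incr m v) as [_ K]; auto.
    pose proof (Rmax_r 0 (v - m)). lra.
  - destruct (Ghat_incr v m) as [_ K]; [lra|].
    pose proof (Rmax_l 0 (v - m)). lra.
Qed.

End Cdf.

Lemma pm_cdf vmin vmax m : vmin <= m <= vmax -> is_cdf_on vmin vmax (point_mass_cdf m).
Proof.
  intros Hm. unfold point_mass_cdf. repeat split.
  - intros x y Hxy. destruct (Rlt_dec x m), (Rlt_dec y m); lra.
  - intros x Hx. destruct (Rlt_dec x m); lra.
  - intros x Hx. destruct (Rlt_dec x m); lra.
  - intros x eps He. destruct (Rlt_dec x m).
    + exists (m - x). split; [lra|]. intros y Hy.
      destruct (Rlt_dec y m); [|lra]. rewrite Rminus_diag, Rabs_R0. lra.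
    + exists 1. split; [lra|]. intros y Hy.
      destruct (Rlt_dec y m); [lra|]. rewrite Rminus_diag, Rabs_R0. lra.
Qed.

Lemma pm_Ghat vmin vmax m : vmin < vmax -> vmin <= m <= vmax ->
  forall b, Ghat vmin (point_mass_cdf m) b = Rmax 0 (b - m).
Proof.
  intros Hv Hm b. pose proof (pm_cdf vmin vmax m Hm) as HG.
  set (G := point_mass_cdf m) in *.
  assert (H0 : Ghat vmin G vmin = 0).
  { rewrite (Ghat_eq vmin G vmin (RiemannInt_P7 G vmin)). apply RiemannInt_P9. }
  assert (H1 : Ghat vmin G m = 0).
  { pose proof (Ghat_diff vmin vmax G HG vmin m) as D.
    pose proof (RiemannInt_const_bound (GI vmin vmax G HG vmin m) (l:=0) (u:=0) (proj1 Hm)) as K.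
    assert (0 * (m - vmin) <= RiemannInt (GI vmin vmax G HG vmin m) <= 0 * (m - vmin)).
    { apply K. intros x Hx. unfold G, point_mass_cdf. destruct (Rlt_dec x m); lra. }
    lra. }
  destruct (Rle_dec m b).
  - rewrite Rmax_right by lra.
    pose proof (Ghat_diff vmin vmax G HG m b) as D.
    pose proof (RiemannInt_const_bound (GI vmin vmax G HG m b) (l:=1) (u:=1) r) as K.
    assert (1 * (b - m) <= RiemannInt (GI vmin vmax G HG m b) <= 1 * (b - m)).
    { apply K. intros x Hx. unfold G, point_mass_cdf. destruct (Rlt_dec x m); lra. }
    lra.
  - rewrite Rmax_left by lra.
    pose proof (Ghat_diff vmin vmax G HG b m) as D.
    pose proof (RiemannInt_const_bound (GI vmin vmax G HG b m) (l:=0) (u:=0) (Rlt_le _ _ (Rnot_le_lt _ _ n))) as K.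
    assert (0 * (m - b) <= RiemannInt (GI vmin vmax G HG b m) <= 0 * (m - b)).
    { apply K. intros x Hx. unfold G, point_mass_cdf. destruct (Rlt_dec x m); lra. }
    lra.
Qed.

Section Exp.
Variables (vmin vmax : R) (Integ : (R -> R) -> Prop) (E : (R -> R) -> R).
Hypothesis HE : is_expectation vmin vmax Integ E.

Lemma Elin f g r h : Integ f -> Integ g -> (forall x, h x = f x + r * g x) ->
  E h = E f + r * E g.
Proof.
  destruct HE as (Hc & Hadd & Hsc & Eadd & Esc & E1 & Epos).
  intros Hf Hg Hh. replace h with (fun x => f x + (fun y => r * g y) x)
    by (apply functional_extensionality; intros; rewrite Hh; reflexivity).
  rewrite Eadd; auto. rewrite Esc; auto.
Qed.

Lemma Integ_lin f g r : Integ f -> Integ g -> Integ (fun x => f x + r * g x).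
Proof.
  destruct HE as (Hc & Hadd & Hsc & _). intros. apply Hadd; auto.
Qed.

Lemma Integ_cont f : continuity f -> Integ f.
Proof. apply HE. Qed.

Lemma Integ_const c : Integ (fun _ => c).
Proof. apply Integ_cont, continuity_const. intros x y; reflexivity. Qed.

Lemma Integ_id : Integ (fun x => x).
Proof. apply Integ_cont, (lip_continuity _ 1); [lra|]. intros. lra. Qed.

Lemma Econst c : E (fun _ => c) = c.
Proof.
  destruct HE as (_ & _ & _ & _ & Esc & E1 & _).
  replace (fun _ : R => c) with (fun x : R => c * (fun _ => 1) x)
    by (apply functional_extensionality; intros; ring).
  rewrite Esc, E1. ring. apply Integ_const.
Qed.

Lemma Emono f g : Integ f -> Integ g -> (forall x, vmin <= x <= vmax -> f x <= g x) ->
  E f <= E g.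
Proof.
  intros Hf Hg Hfg. destruct HE as (_ & _ & _ & _ & _ & _ & Epos).
  assert (0 <= E (fun x => g x + (-1) * f x)).
  { apply Epos. apply Integ_lin; auto. intros x Hx. specialize (Hfg x Hx). lra. }
  rewrite (Elin g f (-1)) in H; auto. lra.
Qed.

End Exp.

Theorem mainTheorem7 (vmin vmax c : R) (Integ : (R -> R) -> Prop)
    (E : (R -> R) -> R) :
  0 <= vmin -> vmin < vmax -> 0 <= c ->
  is_expectation vmin vmax Integ E ->
  (forall G, is_cdf_on vmin vmax G ->
     (forall x, vmin <= x <= vmax ->
        (forall b, vmin <= b <= vmax -> Psi vmin G x b <= Psi vmin G x x) /\
        Psi vmin G x x = Ghat vmin G x) /\
     (forall beta : R -> R,
        (forall v, vmin <= v <= vmax -> vmin <= beta v <= vmax) ->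
        Integ (fun v => Psi vmin G v (beta v)) ->
        E (fun v => Psi vmin G v (beta v)) <= E (Ghat vmin G)) /\
     E (fun v => Psi vmin G v v) = E (Ghat vmin G) /\
     vmin <= E (fun v => v) <= vmax /\
     (forall b, vmin <= b <= vmax ->
        E (fun v => Psi vmin G v b) <= Ghat vmin G (E (fun v => v))) /\
     E (fun v => Psi vmin G v (E (fun v => v))) = Ghat vmin G (E (fun v => v))) /\
  ((exists G, is_cdf_on vmin vmax G /\
      E (Ghat vmin G) - Ghat vmin G (E (fun v => v)) > c)
   <-> c < E (fun v => Rmax 0 (v - E (fun w => w)))) /\
  (c < E (fun v => Rmax 0 (v - E (fun w => w))) ->
     is_cdf_on vmin vmax (point_mass_cdf (E (fun v => v))) /\
     E (Ghat vmin (point_mass_cdf (E (fun v => v))))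
       - Ghat vmin (point_mass_cdf (E (fun v => v))) (E (fun v => v)) > c).
Proof.
  intros H0v Hv Hc HE.
  pose proof (Integ_const vmin vmax Integ E HE) as IC.
  pose proof (Integ_id vmin vmax Integ E HE) as II.
  pose proof (Econst vmin vmax Integ E HE) as EC.
  assert (Hm : vmin <= E (fun v => v) <= vmax).
  { split.
    - rewrite <- (EC vmin) at 1.
      apply (Emono vmin vmax Integ E HE); auto; intros; lra.
    - rewrite <- (EC vmax).
      apply (Emono vmin vmax Integ E HE); auto; intros; lra. }
  set (m := E (fun v => v)) in *.
  assert (Hmax : Integ (fun v => Rmax 0 (v - m))).
  { apply (Integ_cont vmin vmax Integ E HE), (lip_continuity _ 1); [lra|].
    intros x y. unfold Rmax. destruct (Rle_dec 0 (x - m)), (Rle_dec 0 (y - m));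
    unfold Rabs; repeat destruct Rcase_abs; lra. }
  assert (PM : c < E (fun v => Rmax 0 (v - m)) ->
     is_cdf_on vmin vmax (point_mass_cdf m) /\
     E (Ghat vmin (point_mass_cdf m)) - Ghat vmin (point_mass_cdf m) m > c).
  { intros Hcm. split; [apply pm_cdf; auto|].
    replace (Ghat vmin (point_mass_cdf m)) with (fun v => Rmax 0 (v - m))
      by (apply functional_extensionality; intros; symmetry; apply (pm_Ghat vmin vmax); auto).
    rewrite Rminus_diag, Rmax_left by lra. lra. }
  split; [|split; [split|exact PM]].
  - intros G HG.
    assert (HIG : Integ (Ghat vmin G)).
    { apply (Integ_cont vmin vmax Integ E HE). apply (Ghat_cont vmin vmax G HG). }
    assert (Lin : forall b, E (fun v => Psi vmin G v b) = Psi vmin G m b).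
    { intros b. rewrite (Elin vmin vmax Integ E HE (fun _ => Ghat vmin G b - G b * b) (fun v => v) (G b)).
      rewrite EC. unfold Psi, m. ring.
      apply IC. apply II.
      intros; unfold Psi; ring. }
    split; [|split; [|split; [|split; [exact Hm|split]]]].
    + intros x Hx. split.
      * intros b _. apply (Psi_max vmin vmax G HG).
      * apply Psi_diag.
    + intros beta _ Hb. apply (Emono vmin vmax Integ E HE); auto.
      intros x _. rewrite <- (Psi_diag vmin G x). apply (Psi_max vmin vmax G HG).
    + f_equal. apply functional_extensionality. intros; apply Psi_diag.
    + intros b _. rewrite Lin, <- (Psi_diag vmin G m). apply (Psi_max vmin vmax G HG).
    + rewrite Lin. apply Psi_diag.
  - intros [G [HG Hgt]].
    assert (HIG : Integ (Ghat vmin G)).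
    { apply (Integ_cont vmin vmax Integ E HE). apply (Ghat_cont vmin vmax G HG). }
    assert (E (Ghat vmin G) <= E (fun v => Rmax 0 (v - m) + 1 * (fun _ => Ghat vmin G m) v)).
    { apply (Emono vmin vmax Integ E HE); auto.
      apply (Integ_lin vmin vmax Integ E HE); auto.
      intros x _. rewrite Rmult_1_l. apply (Ghat_le_max vmin vmax G HG). }
    assert (Eq : E (fun v => Rmax 0 (v - m) + 1 * (fun _ => Ghat vmin G m) v)
       = E (fun v => Rmax 0 (v - m)) + 1 * E (fun _ => Ghat vmin G m)).
    { apply (Elin vmin vmax Integ E HE); auto. }
    cbv beta in H, Eq. rewrite Eq, EC in H. lra.
  - intros Hcm. exists (point_mass_cdf m). apply PM; auto.
Qed.
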